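(* Assume $r$ is not a codeword of the GRS code (equivalently $\deg R\ge k$). Let $A_{s,\ell}$ be the $(\ell+1)\times(\ell+1)$ matrix over $\mathbb F_q[X]$ whose $t$-th row ($t=0,\dots,\ell$) is the coefficient vector of $P^{(t)}$, where $P^{(t)}=G^{s-t}(Y-R)^t$ for $0\le t<s$ and $P^{(t)}=Y^{t-s}(Y-R)^s$ for $s\le t\le\ell$. Then $\Delta(A_{s,\ell}W_\ell)=\tfrac12(2\ell-s+1)s(\deg R-k+1)\le \ell s(n-k)$.
   Context: Let $\mathbb F_q$ be a finite field, $1\le k<n<q$, $\alpha_0,\dots,\alpha_{n-1}$ distinct nonzero elements of $\mathbb F_q$, $w_0,\dots,w_{n-1}$ nonzero elements of $\mathbb F_q$. The GRS code is $\{(w_0f(\alpha_0),\dots,w_{n-1}f(\alpha_{n-1})): f\in\mathbb F_q[X],\deg f<k\}$. Let $r\in\mathbb F_q^n$, $r_i'=r_i/w_i$, $G(X)=\prod_i(X-\alpha_i)$ and $R(X)$ the unique polynomial of degree $<n$ with $R(\alpha_i)=r_i'$. Let $s\le\ell$ be positive integers. A polynomial $\sum_{t=0}^\ell Q_t(X)Y^t$ has coefficient vector $(Q_0,\dots,Q_\ell)$. $W_\ell=\mathrm{diag}(1,X^{k-1},\dots,X^{\ell(k-1)})$. For a square matrix $V$ over $\mathbb F_q[X]$ with rows $v_i$, $\deg v_i=\max_j\deg v_{i,j}$, $\deg V=\sum_i\deg v_i$ and $\Delta(V)=\deg V-\deg\det V$. *)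

(* Defs.v *)
From HB Require Import structures.
From mathcomp Require Import all_boot all_order all_algebra all_field.
Set Implicit Arguments. Unset Strict Implicit. Unset Printing Implicit Defensive.
Import Order.TTheory GRing.Theory Num.Theory.
Local Open Scope ring_scope.

(* degree of a polynomial over F (the zero polynomial gets degree 0;
   only nonzero polynomials occur where this matters) *)
Definition pdeg (R : nzRingType) (p : {poly R}) : nat := (size p).-1.

Definition in_GRS (F : fieldType) (n k : nat) (alpha w : 'I_n -> F)
  (r : 'I_n -> F) : Prop :=
  exists f : {poly F}, (size f <= k)%N /\ forall i, r i = w i * f.[alpha i].

Definition Gpoly (F : fieldType) (n : nat) (alpha : 'I_n -> F) : {poly F} :=
  \prod_(i < n) ('X - (alpha i)%:P).

(* Bivariate polynomials: {poly {poly F}}, outer variable Y, inner X.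
   P^(t) = G^(s-t) (Y-R)^t for t < s, and Y^(t-s) (Y-R)^s for s <= t. *)
Definition Pt (F : fieldType) (G R : {poly F}) (s t : nat) : {poly {poly F}} :=
  if (t < s)%N then (G ^+ (s - t))%:P * ('X - R%:P) ^+ t
  else 'X ^+ (t - s) * ('X - R%:P) ^+ s.

Definition Amat (F : fieldType) (G R : {poly F}) (s l : nat)
  : 'M[{poly F}]_(l.+1) :=
  \matrix_(t < l.+1, j < l.+1) (Pt G R s t)`_j.

Definition Wmat (F : fieldType) (k l : nat) : 'M[{poly F}]_(l.+1) :=
  diag_mx (\row_(j < l.+1) ('X ^+ (j * (k - 1)) : {poly F})).

Definition rowdeg (F : fieldType) (m : nat) (V : 'M[{poly F}]_m) (i : 'I_m)
  : nat := \max_(j < m) pdeg (V i j).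
Definition mxdeg (F : fieldType) (m : nat) (V : 'M[{poly F}]_m) : nat :=
  \sum_(i < m) rowdeg V i.
Definition Delta (F : fieldType) (m : nat) (V : 'M[{poly F}]_m) : int :=
  (mxdeg V)%:Z - (pdeg (\det V))%:Z.

(* Main.v *)
Require Import Defs.
From HB Require Import structures.
From mathcomp Require Import all_boot all_order all_algebra all_field.
From mathcomp Require Import zify ring.
Import Order.TTheory GRing.Theory Num.Theory.
Local Open Scope ring_scope.

Section Aux.
Context {F : finFieldType}.

Lemma pdeg0 : pdeg (0 : {poly F}) = 0%N.
Proof. by rewrite /pdeg size_poly0. Qed.

Lemma pdegM (a b : {poly F}) : a != 0 -> b != 0 ->
  pdeg (a * b) = (pdeg a + pdeg b)%N.
Proof.
move=> a0 b0; rewrite /pdeg size_mul //.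
have ha : (0 < size a)%N by rewrite size_poly_gt0.
have hb : (0 < size b)%N by rewrite size_poly_gt0.
by case: (size a) ha => // x _; case: (size b) hb => // y _; rewrite addSn addnS.
Qed.

Lemma pdegM_le (a b : {poly F}) : (pdeg (a * b) <= pdeg a + pdeg b)%N.
Proof.
case: (eqVneq a 0) => [->|a0]; first by rewrite mul0r pdeg0.
case: (eqVneq b 0) => [->|b0]; first by rewrite mulr0 pdeg0.
by rewrite pdegM.
Qed.

Lemma pdegX (p : {poly F}) m : pdeg (p ^+ m) = (m * pdeg p)%N.
Proof. by rewrite /pdeg size_exp mulnC. Qed.

Lemma pdegXn m : pdeg ('X^m : {poly F}) = m.
Proof. by rewrite /pdeg size_polyXn. Qed.

Lemma pdegN (p : {poly F}) : pdeg (- p) = pdeg p.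
Proof. by rewrite /pdeg size_polyN. Qed.

Lemma pdegB_le (a b : {poly F}) : (pdeg (a - b) <= maxn (pdeg a) (pdeg b))%N.
Proof.
have key : forall x y z : nat, (x <= maxn y z -> x.-1 <= maxn y.-1 z.-1)%N.
  move=> x y z; rewrite -!subn1; lia.
rewrite /pdeg; apply: key; rewrite -(size_polyN b); exact: size_polyD.
Qed.

Variable R : {poly F}.

Lemma coefP_van t j : (t < j)%N -> ((('X - R%:P) ^+ t)`_j) = 0.
Proof. by move=> h; rewrite nth_default // size_exp_XsubC. Qed.

Lemma coefP_0 t : ((('X - R%:P) ^+ t)`_0) = (- R) ^+ t.
Proof. by rewrite -horner_coef0 horner_exp hornerXsubC sub0r. Qed.

Lemma coefP_top t : ((('X - R%:P) ^+ t)`_t) = 1.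
Proof.
have /monicP := monic_exp t (monicXsubC R).
by rewrite lead_coefE size_exp_XsubC.
Qed.

Lemma coefP_bound t j : (pdeg ((('X - R%:P) ^+ t)`_j) <= (t - j) * pdeg R)%N.
Proof.
elim: t j => [|t IH] j.
  rewrite expr0 coefE; case: (j == 0)%N; by rewrite /pdeg ?size_poly1 ?size_poly0.
rewrite exprS mulrBl coefB coefXM coefCM.
case: j => [|j].
  rewrite eqxx sub0r pdegN; apply: leq_trans (pdegM_le _ _) _.
  have key : forall a b : nat, (b <= (t - 0) * a -> a + b <= (t.+1 - 0) * a)%N.
    move=> a b; nia.
  exact: key (IH 0%N).
rewrite /=.
apply: leq_trans (pdegB_le _ _) _.
have h1 := IH j.
case: (ltnP t j.+1) => tj.
  rewrite [X in R * X]coefP_van // mulr0 pdeg0.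
  have key : forall a b : nat, (b <= (t - j) * a -> maxn b 0 <= (t.+1 - j.+1) * a)%N.
    move=> a b; nia.
  exact: key h1.
have h2 := pdegM_le R ((('X - R%:P) ^+ t)`_j.+1).
have h3 := IH j.+1.
have key : forall a b c d : nat, (b <= (t - j) * a -> c <= a + d ->
   d <= (t - j.+1) * a -> maxn b c <= (t.+1 - j.+1) * a)%N.
  move=> a b c d; nia.
exact: key h1 h2 h3.
Qed.

End Aux.

Lemma sum_min s m : (2 * \sum_(t < m.+1) minn t s)%N =
  if (m <= s)%N then (m * m.+1)%N else (s * (2 * m + 1 - s))%N.
Proof.
elim: m => [|m IH]; first by rewrite big_ord1 /= min0n.
rewrite big_ord_recr /= mulnDr IH.
case: (leqP m s) => h1; case: (leqP m.+1 s) => h2; nia.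
Qed.

Theorem lemma6 (F : finFieldType) (n k s l : nat)
  (alpha w : 'I_n -> F) (r : 'I_n -> F) (R : {poly F}) :
  (1 <= k)%N -> (k < n)%N -> (n < #|F|)%N ->
  injective alpha -> (forall i, alpha i != 0) -> (forall i, w i != 0) ->
  (size R <= n)%N -> (forall i, R.[alpha i] = r i / w i) ->
  (1 <= s)%N -> (s <= l)%N ->
  ~ in_GRS k alpha w r ->
  ((Delta (Amat (Gpoly alpha) R s l *m Wmat F k l))%:~R : rat)
    = 1 / 2 * (2 * l%:R - s%:R + 1) * s%:R * ((pdeg R)%:R - k%:R + 1)
  /\ Delta (Amat (Gpoly alpha) R s l *m Wmat F k l) <= (l * s * (n - k))%:Z.
Proof.
move=> k1 kn _ _ _ w0 sRn hRa s1 sl nGRS.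
set G := Gpoly alpha.
set M := Amat G R s l *m Wmat F k l.
have G0 : G != 0 by apply: monic_neq0; apply: monic_prod_XsubC.
have hk : (k < size R)%N.
  rewrite ltnNge; apply/negP => hR; apply: nGRS; exists R; split => // i.
  by rewrite hRa mulrC divfK.
have R0 : R != 0 by rewrite -size_poly_gt0; exact: leq_ltn_trans (leq0n k) hk.
set dR := pdeg R.
have kdR : (k <= dR)%N.
  have key : forall x : nat, (k < x -> k <= x.-1)%N by move=> x; rewrite -subn1; lia.
  exact: key hk.
have dRn : (dR < n)%N.
  have key : forall x : nat, (k < x -> x <= n -> x.-1 < n)%N by move=> x; rewrite -subn1; lia.
  exact: key hk sRn.
set g := pdeg G.
have ME t j : M t j = (Pt G R s t)`_j * 'X^(j * (k - 1)).
  by rewrite /M /Amat /Wmat mul_mx_diag !mxE.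
pose D (t : nat) := if (t < s)%N then ((s - t) * g + t * dR)%N
                    else (s * dR + (t - s) * (k - 1))%N.
have Mub (t j : 'I_l.+1) : (pdeg (M t j) <= D t)%N.
  rewrite ME /Pt /D; case: ifP => ts.
    rewrite coefCM; case: (ltnP t j) => tj.
      by rewrite coefP_van // mulr0 mul0r pdeg0.
    apply: leq_trans (pdegM_le _ _) _.
    apply: leq_trans (leq_add (pdegM_le _ _) (leqnn _)) _.
    rewrite pdegX pdegXn.
    have key : forall a b c : nat, (b <= (t - j) * a -> k <= a ->
      (s - t) * c + b + j * (k - 1) <= (s - t) * c + t * a)%N.
      move=> a b c; nia.
    exact: key (coefP_bound R t j) kdR.
  rewrite coefXnM; case: ifP => hj; first by rewrite mul0r pdeg0.
  case: (ltnP s (j - (t - s))) => hs.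
    by rewrite coefP_van // mul0r pdeg0.
  apply: leq_trans (pdegM_le _ _) _; rewrite pdegXn.
  move/negbT: hj; move/negbT: ts; rewrite -!leqNgt => ts hj.
  have key : forall a b : nat, (b <= (s - (j - (t - s))) * a -> k <= a ->
      b + j * (k - 1) <= s * a + (t - s) * (k - 1))%N.
    move=> a b; nia.
  exact: key (coefP_bound R s (j - (t - s))) kdR.
have Mach (t : 'I_l.+1) : exists j, pdeg (M t j) = D t.
  rewrite /D; case: ifP => ts.
    exists ord0; rewrite ME /Pt ts coefCM /= coefP_0 mul0n expr0 mulr1.
    rewrite pdegM ?expf_neq0 ?oppr_eq0 // !pdegX pdegN //.
  have tsl : (t - s < l.+1)%N by have := ltn_ord t; lia.
  exists (Ordinal tsl); rewrite ME /Pt ts coefXnM /= ltnn subnn coefP_0.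
  have h1 : (- R) ^+ s != 0 by rewrite expf_neq0 // oppr_eq0.
  have h2 : ('X^((t - s) * (k - 1)) : {poly F}) != 0 by rewrite monic_neq0 // monicXn.
  by rewrite pdegM // pdegX pdegN pdegXn.
have rowD : forall u : 'I_l.+1, rowdeg M u = D u.
  move=> u; apply/eqP; rewrite eqn_leq; apply/andP; split.
    by apply/bigmax_leqP => j _; apply: Mub.
  have [j <-] := Mach u; exact: leq_bigmax.
have trig : is_trig_mx M.
  apply/is_trig_mxP => t j tj; rewrite ME /Pt; case: ifP => ts.
    by rewrite coefCM coefP_van // mulr0 mul0r.
  rewrite coefXnM; case: ifP => hj; first by rewrite mul0r.
  rewrite coefP_van ?mul0r //.
  move/negbT: ts; move/negbT: hj; rewrite -!leqNgt; lia.
pose E (t : nat) := ((if (t < s)%N then ((s - t) * g)%N else 0%N) + t * (k - 1))%N.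
have diagE (t : 'I_l.+1) : M t t != 0 /\ pdeg (M t t) = E t.
  rewrite ME /Pt /E; case: ifP => ts.
    rewrite coefCM coefP_top mulr1.
    have h1 : G ^+ (s - t) != 0 by rewrite expf_neq0.
    have h2 : ('X^(t * (k - 1)) : {poly F}) != 0 by rewrite monic_neq0 ?monicXn.
    by split; [rewrite mulf_neq0 | rewrite pdegM // pdegX pdegXn].
  rewrite coefXnM.
  have -> : (t < t - s)%N = false by lia.
  have -> : (t - (t - s) = s)%N by move/negbT: ts; rewrite -leqNgt; lia.
  rewrite coefP_top mul1r; split; first by rewrite monic_neq0 ?monicXn.
  by rewrite pdegXn.
have detE : pdeg (\det M) = \sum_(t < l.+1) E t.
  rewrite det_trig //.
  have [_ ->] : \prod_(t < l.+1) M t t != 0 /\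
      pdeg (\prod_(t < l.+1) M t t) = \sum_(t < l.+1) E t; last by [].
  apply: (big_ind2 (fun p m => p != 0 /\ pdeg p = m)).
  - by split; [rewrite oner_eq0 | rewrite /pdeg size_poly1].
  - move=> p1 n1 p2 n2 [h1 e1] [h2 e2]; split; first by rewrite mulf_neq0.
    by rewrite pdegM // e1 e2.
  - by move=> t _; apply: diagE.
set e := (dR + 1 - k)%N.
have DE (t : 'I_l.+1) : D t = (E t + minn t s * e)%N.
  rewrite /D /E /e; case: ifP => ts; nia.
set S := (\sum_(t < l.+1) minn t s)%N.
have mxE' : mxdeg M = (pdeg (\det M) + S * e)%N.
  rewrite /mxdeg (eq_bigr _ (fun t _ => rowD t)) (eq_bigr _ (fun t _ => DE t)).
  by rewrite big_split /= detE /S big_distrl.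
have DeltaE : Delta M = (S * e)%N%:Z.
  by rewrite /Delta mxE' addnC PoszD addrK.
have hS : (2 * S)%N = (s * (2 * l + 1 - s))%N.
  rewrite /S sum_min; case: ifP => h //.
  have -> : l = s by lia.
  nia.
rewrite DeltaE; split.
  have -> : (((S * e)%N%:Z)%:~R : rat) = (S * e)%:R by [].
  rewrite natrM.
  have hS' : (2 * S%:R : rat) = s%:R * (2 * l%:R + 1 - s%:R).
    have := congr1 (fun x : nat => (x%:R : rat)) hS; rewrite /= natrM => ->.
    rewrite natrM natrB; last by lia.
    by rewrite natrD natrM.
  have he : (e%:R : rat) = dR%:R + 1 - k%:R by rewrite /e natrB ?natrD //; lia.
  have -> : (S%:R : rat) = s%:R * (2 * l%:R + 1 - s%:R) / 2.
    by rewrite -hS' mulrC mulKf // pnatr_eq0.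
  by rewrite he /dR; field.
rewrite lez_nat.
have hSl : (S <= l * s)%N by nia.
have he2 : (e <= n - k)%N by rewrite /e; lia.
have := leq_mul hSl he2; lia.
Qed.
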